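(* Let $q$ be a power of an odd prime with $q\equiv1\pmod 4$, $t=\frac{q-1}{4}$, $T$ a generator of $\widehat{\mathbb F_q^{\times}}$, and $\lambda\in\mathbb F_q^\times$. Then $$\frac{12}{q-1}\sum_{j=0}^{q-2}\frac{g(T^{j})\,g(T^{t+j})^2\,g(T^{2t+j})}{g(T^{4j})}\,T^{4j}(4\lambda)=12q\,T^t(-1)\left(T^{2t}(1-\lambda^4)-1\right).$$
   Context: Characters are extended by $\chi(0)=0$. With $\mathrm{tr}:\mathbb F_q\to\mathbb F_p$ the trace, $\zeta$ a fixed primitive $p$-th root of unity and $\theta(x)=\zeta^{\mathrm{tr}(x)}$, the Gauss sum is $g(\chi)=\sum_{x\in\mathbb F_q}\chi(x)\theta(x)$ (so $g$ of the trivial character is $-1$). *)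

(* Defs.v *)
From HB Require Import structures.
From mathcomp Require Import all_boot all_order all_algebra all_field.
Set Implicit Arguments. Unset Strict Implicit. Unset Printing Implicit Defensive.
Import Order.TTheory GRing.Theory Num.Theory.
Local Open Scope ring_scope.

Section Defs.
Variable F : finFieldType.

Definition is_mchar (chi : F -> algC) : Prop :=
  [/\ chi 0 = 0, chi 1 = 1 & forall x y : F, chi (x * y) = chi x * chi y].

(* The j-th power of a character in the character group (extended by 0 at 0;
   in particular chi^0 is the trivial character, which vanishes at 0). *)
Definition mchar_pow (chi : F -> algC) (j : nat) : F -> algC :=
  fun x => if x == 0 then 0 else chi x ^+ j.

Definition mchar_generator (T : F -> algC) : Prop :=
  is_mchar T /\
  forall chi, is_mchar chi -> exists j : nat, forall x, chi x = mchar_pow T j x.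

(* Absolute trace F_q -> F_p, where q = p ^ n, as an element of F. *)
Definition ftrace (p : nat) (x : F) : F :=
  \sum_(i < logn p #|F|) x ^+ (p ^ i).

(* The trace as a residue in {0,..,p-1} (its image in the prime field). *)
Definition ftrace_nat (p : nat) (x : F) : nat :=
  if [pick k : 'I_p | (k%:R : F) == ftrace p x] is Some k then val k else 0%N.

Definition theta (p : nat) (zeta : algC) (x : F) : algC := zeta ^+ ftrace_nat p x.

Definition gauss (p : nat) (zeta : algC) (chi : F -> algC) : algC :=
  \sum_(x : F) chi x * theta p zeta x.

End Defs.

(* Main.v *)
Require Import Defs.
From HB Require Import structures.
From mathcomp Require Import all_boot all_order all_algebra all_field.
From mathcomp Require Import all_fingroup all_solvable.
From mathcomp Require Import ring zify.
Import Order.TTheory GRing.Theory Num.Theory.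
Local Open Scope ring_scope.
Set Implicit Arguments. Unset Strict Implicit. Unset Printing Implicit Defensive.


Section Chars.
Variable F : finFieldType.
Variable T : F -> algC.
Hypothesis HT : mchar_generator T.
Local Notation q := #|F|.
Local Notation n := (#|F| - 1)%N.
Local Notation Tp := (mchar_pow T).

Lemma q_gt1 : (1 < q)%N.
Proof. exact: finNzRing_gt1. Qed.

Lemma n_gt0 : (0 < n)%N.
Proof. by rewrite subn_gt0 q_gt1. Qed.

Lemma qE : q = n.+1.
Proof. by rewrite subn1 prednK // ltnW // q_gt1. Qed.

Lemma T0 : T 0 = 0. Proof. by case: HT => [[]]. Qed.
Lemma T1 : T 1 = 1. Proof. by case: HT => [[]]. Qed.
Lemma TM x y : T (x * y) = T x * T y. Proof. by case: HT => [[]]. Qed.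
Lemma TX x k : T (x ^+ k) = T x ^+ k.
Proof. by elim: k => [|k IH]; rewrite ?T1 // !exprS TM IH. Qed.

Lemma expf_n (x : F) : x != 0 -> x ^+ n = 1.
Proof.
move=> x0; have := expf_card x; rewrite {1}qE exprSr.
by move=> /(congr1 (fun y => y / x)); rewrite mulfK // divff.
Qed.

Lemma Tn x : x != 0 -> T x ^+ n = 1.
Proof. by move=> x0; rewrite -TX expf_n // T1. Qed.

Lemma Tneq0 x : x != 0 -> T x != 0.
Proof.
move=> x0; apply/eqP=> Tx0; have := Tn x0; rewrite Tx0 expr0n.
by rewrite eqn0Ngt n_gt0 /= => /eqP; rewrite eq_sym oner_eq0.
Qed.

Lemma Tp0 j : Tp j 0 = 0. Proof. by rewrite /mchar_pow eqxx. Qed.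
Lemma TpE j x : x != 0 -> Tp j x = T x ^+ j.
Proof. by rewrite /mchar_pow => /negbTE->. Qed.
Lemma Tp1 j : Tp j 1 = 1. Proof. by rewrite TpE ?oner_neq0 // T1 expr1n. Qed.

Lemma TpM j x y : Tp j (x * y) = Tp j x * Tp j y.
Proof.
have [->|x0] := eqVneq x 0; first by rewrite mul0r !Tp0 mul0r.
have [->|y0] := eqVneq y 0; first by rewrite mulr0 !Tp0 mulr0.
by rewrite !TpE ?mulf_neq0 // TM exprMn.
Qed.

Lemma TpD a b x : Tp (a + b) x = Tp a x * Tp b x.
Proof.
have [->|x0] := eqVneq x 0; first by rewrite !Tp0 mul0r.
by rewrite !TpE // exprD.
Qed.

Lemma Tp_dvd j x : (n %| j)%N -> x != 0 -> Tp j x = 1.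
Proof. by case/dvdnP=> k -> x0; rewrite TpE // mulnC exprM Tn // expr1n. Qed.

Lemma Tp_mod j x : Tp (j %% n) x = Tp j x.
Proof.
have [->|x0] := eqVneq x 0; first by rewrite !Tp0.
by rewrite {2}(divn_eq j n) TpD (@Tp_dvd (_ * n)) ?dvdn_mull // mul1r.
Qed.

Lemma Tp_neq0 j x : x != 0 -> Tp j x != 0.
Proof. by move=> x0; rewrite TpE // expf_neq0 // Tneq0. Qed.

Lemma Tp_eq0 j x : (Tp j x == 0) = (x == 0).
Proof. by have [->|x0] := eqVneq x 0; rewrite ?Tp0 ?eqxx // (negbTE (Tp_neq0 j x0)). Qed.

Lemma exists_gen : {x0 : F | n.-primitive_root x0}.
Proof.
have: has n.-primitive_root (enum (predC1 (0 : F))).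
  apply: has_prim_root; rewrite ?n_gt0 ?enum_uniq //.
    apply/allP=> x; rewrite mem_enum /= => x0.
    by rewrite unity_rootE expf_n.
  by rewrite -cardE cardC1 subn1.
by case/hasP/sig2W=> x0 _ Hx0; exists x0.
Qed.


Let x0 := sval exists_gen.
Let x0P : n.-primitive_root x0 := svalP exists_gen.
Lemma x0_neq0 : x0 != 0.
Proof. by rewrite (prim_root_eq0 x0P) -lt0n n_gt0. Qed.

Let logf (x : F) : nat :=
  if [pick k : 'I_n | x0 ^+ k == x] is Some k then val k else 0%N.

Lemma logf_lt x : (logf x < n)%N.
Proof. by rewrite /logf; case: pickP => [k _|_]; rewrite ?ltn_ord ?n_gt0. Qed.

Lemma logfP x : x != 0 -> x0 ^+ logf x = x.
Proof.
move=> xnz; rewrite /logf; case: pickP => [k /eqP //|H].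
have [i Hi] := prim_rootP x0P (expf_n xnz).
by have := H i; rewrite Hi eqxx.
Qed.

Let w := sval (C_prim_root_exists n_gt0).
Let wP : n.-primitive_root w := svalP (C_prim_root_exists n_gt0).

Let chi0 (x : F) : algC := if x == 0 then 0 else w ^+ logf x.

Lemma chi0_mchar : is_mchar chi0.
Proof.
split; first by rewrite /chi0 eqxx.
  rewrite /chi0 oner_eq0; apply/eqP; rewrite -(prim_order_dvd wP).
  by rewrite (prim_order_dvd x0P) logfP ?oner_neq0.
move=> x y; rewrite /chi0 mulf_eq0.
have [->|xnz] := eqVneq x 0; first by rewrite ?eqxx ?mul0r.
have [->|ynz] := eqVneq y 0; first by rewrite ?eqxx ?orbT ?mulr0.
rewrite /= -exprD; apply/eqP; rewrite (eq_prim_root_expr wP).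
rewrite -(eq_prim_root_expr x0P) exprD !logfP ?mulf_neq0 //.
Qed.

Lemma T_eq1 x : T x = 1 -> x = 1.
Proof.
move=> Tx; have xnz : x != 0.
  by apply/eqP=> x0'; move: Tx; rewrite x0' T0 => /eqP; rewrite eq_sym oner_eq0.
case: HT => _ /(_ _ chi0_mchar) [j0 Hj0].
have := Hj0 x; rewrite /chi0 TpE // (negbTE xnz) Tx expr1n => /eqP.
rewrite -(prim_order_dvd wP) => /dvdn_leq.
have := logf_lt x; case: (logf x) (logfP xnz) => [<- _ _ //| k _ lt1 le1].
by move: (leq_trans lt1 (le1 isT)); rewrite ltnn.
Qed.

Lemma Tp_x0 j : Tp j x0 = 1 -> (n %| j)%N.
Proof.
rewrite TpE ?x0_neq0 // -TX => /T_eq1 /eqP.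
by rewrite -(prim_order_dvd x0P).
Qed.

Lemma sumTp j : \sum_x Tp j x = if (n %| j)%N then n%:R else 0.
Proof.
case: ifP => [dj|ndj].
  rewrite (bigD1 0) //= Tp0 add0r (eq_bigr (fun=> 1)); last by move=> x xnz; rewrite Tp_dvd.
  by rewrite sumr_const cardC1 subn1.
set S := \sum_x _.
have : S = Tp j x0 * S.
  rewrite {1}/S (reindex_inj (mulfI x0_neq0)) /= /S mulr_sumr.
  by apply: eq_bigr => x _; rewrite TpM.
move/eqP; rewrite -subr_eq0 -{1}[S]mul1r -mulrBl mulf_eq0 subr_eq0 => /orP[|/eqP//].
by move/eqP => /esym /Tp_x0; rewrite ndj.
Qed.

Lemma sumTpj x : x != 0 -> \sum_(j < n) Tp j x = if x == 1 then n%:R else 0.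
Proof.
move=> xnz; under eq_bigr => j _ do rewrite TpE //.
have [->|x1] := eqVneq x 1.
  by rewrite T1 (eq_bigr (fun=> 1)) ?sumr_const ?card_ord // => j _; rewrite expr1n.
have := subrX1 (T x) n; rewrite Tn // subrr => /esym /eqP.
rewrite mulf_eq0 subr_eq0 => /orP[/eqP/T_eq1 x1'|/eqP //].
by rewrite x1' eqxx in x1.
Qed.

End Chars.

Section Theta.
Variable F : finFieldType.
Variable p : nat.
Variable zeta : algC.
Hypothesis Hp : prime p.
Hypothesis HpF : p \in [pchar F].
Hypothesis Hzeta : p.-primitive_root zeta.
Local Notation q := #|F|.
Local Notation m := (logn p #|F|).

Lemma cardF : q = (p ^ m)%N.
Proof. exact: (card_pprimeChar HpF). Qed.

Lemma m_gt0 : (0 < m)%N.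
Proof.
case: (posnP m) => // m0; have := finNzRing_gt1 F.
by rewrite cardF m0 expn0.
Qed.

Lemma natF_inj a b : (a < p)%N -> (b < p)%N -> a%:R = b%:R :> F -> a = b.
Proof.
wlog le_ab : a b / (a <= b)%N.
  move=> H ap bp e; case/orP: (leq_total a b) => le; first exact: H.
  by apply/esym/H.
move=> ap bp /eqP; rewrite eq_sym -subr_eq0 -natrB // -(dvdn_pcharf HpF) => hd.
apply/eqP; rewrite eqn_leq le_ab /= -subn_eq0 eqn0Ngt; apply/negP => pos.
by have := leq_ltn_trans (leq_subr a b) bp; rewrite ltnNge dvdn_leq.
Qed.

Lemma pnat_pow i : [pchar F].-nat (p ^ i)%N.
Proof.
rewrite (eq_pnat _ (pcharf_eq HpF)) pnatX; apply/orP; left.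
by rewrite pnat_id.
Qed.

Lemma ftraceD (x y : F) : ftrace p (x + y) = ftrace p x + ftrace p y.
Proof.
rewrite /ftrace -big_split /=; apply: eq_bigr => i _.
by rewrite exprDn_pchar // pnat_pow.
Qed.

Lemma frob_sum (x : F) : (ftrace p x) ^+ p = ftrace p x.
Proof.
rewrite /ftrace.
transitivity (\sum_(i < m) x ^+ (p ^ i.+1)).
  have Hmo : {morph (fun y : F => y ^+ p) : a b / a + b >-> a + b}.
    by move=> a b /=; rewrite exprDn_pchar // -[p]expn1 pnat_pow.
  have H0 : (0 : F) ^+ p = 0 by rewrite expr0n gtn_eqF // prime_gt0.
  rewrite (big_morph (fun y : F => y ^+ p) Hmo H0).
  by apply: eq_bigr => i _; rewrite -exprM expnSr.
have [k Hk] : exists k, m = k.+1 by exists m.-1; rewrite prednK // m_gt0.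
have xq : x ^+ (p ^ k.+1) = x by rewrite -Hk -cardF expf_card.
rewrite Hk big_ord_recr /= big_ord_recl /= xq expn0 expr1 addrC; congr (_ + _).
Qed.

Lemma natr_frob k : (k%:R : F) ^+ p = k%:R.
Proof.
elim: k => [|k IH]; first by rewrite expr0n gtn_eqF // prime_gt0.
by rewrite -addn1 natrD exprDn_pchar ?IH ?expr1n // -[p]expn1 pnat_pow.
Qed.

Lemma fix_nat (y : F) : y ^+ p = y -> exists2 k, (k < p)%N & k%:R = y.
Proof.
move=> yp; case: (pickP (fun k : 'I_p => k%:R == y)) => [k /eqP ky|none].
  by exists k; rewrite ?ltn_ord.
exfalso.
pose P : {poly F} := 'X^p - 'X.
have p1 := prime_gt1 Hp.
have sP : size P = p.+1.
  by rewrite /P size_polyDl ?size_polyXn // size_polyN size_polyX ltnS.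
have Pnz : P != 0 by rewrite -size_poly_eq0 sP.
pose rs := y :: map (fun k : 'I_p => (k : nat)%:R : F) (enum 'I_p).
have := @max_poly_roots _ P rs Pnz.
have -> : all (root P) rs.
  rewrite /= rootE /P !hornerE yp subrr eqxx /=.
  by apply/allP => z /mapP [k _ ->]; rewrite rootE !hornerE natr_frob subrr.
have -> : uniq rs.
  rewrite /= map_inj_uniq ?enum_uniq ?andbT.
    by apply/mapP => [[k _ ky]]; have := none k; rewrite -ky eqxx.
  by move=> a b /natF_inj ab; apply: ord_inj; apply: ab; rewrite ltn_ord.
by rewrite /= size_map size_enum_ord sP ltnn => /(_ isT isT).
Qed.

Lemma ftrace_natP (x : F) :
  ((ftrace_nat p x)%:R = ftrace p x) /\ (ftrace_nat p x < p)%N.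
Proof.
rewrite /ftrace_nat; case: pickP => [k /eqP kx|none].
  by split; rewrite ?kx ?ltn_ord.
split; last exact: prime_gt0.
have [k kp kx] := fix_nat (frob_sum x).
by have := none (Ordinal kp); rewrite /= kx eqxx.
Qed.

Lemma ftrace0 : ftrace p (0 : F) = 0.
Proof.
have := ftraceD 0 0; rewrite addr0 => /(congr1 (fun z => z - ftrace p (0 : F))).
by rewrite addrK subrr.
Qed.

Lemma thetaD (x y : F) : theta p zeta (x + y) = theta p zeta x * theta p zeta y.
Proof.
rewrite /theta -exprD -(prim_expr_mod Hzeta (_ + _)); congr (_ ^+ _).
have [ex lx] := ftrace_natP x; have [ey ly] := ftrace_natP y.
have [exy lxy] := ftrace_natP (x + y).
apply: natF_inj => //; first by rewrite ltn_mod prime_gt0.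
by rewrite (GRing.natr_mod_pchar HpF) natrD ex ey exy ftraceD.
Qed.

Lemma theta0 : theta p zeta (0 : F) = 1.
Proof.
rewrite /theta; have [e l] := ftrace_natP (0 : F).
have -> : ftrace_nat p (0 : F) = 0%N by apply: natF_inj; rewrite ?prime_gt0 // e ftrace0.
by rewrite expr0.
Qed.

Lemma exists_tr : exists y : F, ftrace p y != 0.
Proof.
case: (pickP (fun y : F => ftrace p y != 0)) => [y hy|all0]; first by exists y.
exfalso.
have [k Hk] : exists k, m = k.+1 by exists m.-1; rewrite prednK // m_gt0.
have p1 := prime_gt1 Hp.
pose Q : {poly F} := \sum_(i < m) 'X^(p ^ i).
have coefQ j : Q`_j = \sum_(i < m) (j == p ^ i)%N%:R.
  by rewrite /Q coef_sum; apply: eq_bigr => i _; rewrite coefXn.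
have sQ : (size Q <= (p ^ k).+1)%N.
  apply/leq_sizeP => j lej; rewrite coefQ big1 // => i _.
  rewrite gtn_eqF //; apply: leq_trans lej; rewrite ltnS leq_exp2l //.
  by rewrite -ltnS -Hk ltn_ord.
have Qnz : Q != 0.
  apply/eqP => /(congr1 (fun P : {poly F} => P`_(p ^ k))) /eqP.
  rewrite coefQ coef0.
  have km : (k < m)%N by rewrite Hk.
  rewrite (bigD1 (Ordinal km)) //= eqxx big1 ?addr0 ?oner_eq0 //.
  move=> i /eqP ni; rewrite eqn_exp2l //; case: eqP => // ik; case: ni.
  by apply: ord_inj; rewrite /= ik.
have := @max_poly_roots _ Q (enum F) Qnz.
rewrite enum_uniq -cardE cardF Hk.
have -> : all (root Q) (enum F).
  apply/allP => y _; rewrite rootE /Q horner_sum.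
  under eq_bigr => i _ do rewrite hornerXn.
  by have := all0 y; move/negbFE.
move=> /(_ isT isT) lt; have := leq_trans lt sQ.
by rewrite ltnS leqNgt ltn_exp2l // ltnSn.
Qed.

Lemma sum_theta : \sum_(x : F) theta p zeta x = 0.
Proof.
have [y ty] := exists_tr.
have thy : theta p zeta y != 1.
  rewrite /theta; have [e l] := ftrace_natP y.
  apply/eqP => /eqP; rewrite -(prim_order_dvd Hzeta) => hd.
  have : ftrace_nat p y = 0%N.
    apply/eqP; move: hd; rewrite eqn0Ngt; apply: contraTN => pos.
    by rewrite /dvdn modn_small // -lt0n.
  by move=> e0; rewrite -e e0 eqxx in ty.
set S := \sum_x _.
have : S = theta p zeta y * S.
  rewrite {1}/S (reindex_inj (addrI y)) /= /S mulr_sumr.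
  by apply: eq_bigr => x _; rewrite thetaD.
move/eqP; rewrite -subr_eq0 -{1}[S]mul1r -mulrBl mulf_eq0 subr_eq0 => /orP[|/eqP//].
by rewrite eq_sym (negbTE thy).
Qed.

End Theta.

Section Main.
Variable F : finFieldType.
Variable p : nat.
Variable zeta : algC.
Variable T : F -> algC.
Hypothesis Hp : prime p.
Hypothesis Hodd : odd p.
Hypothesis HpF : p \in [pchar F].
Hypothesis Hzeta : p.-primitive_root zeta.
Hypothesis HT : mchar_generator T.
Local Notation q := #|F|.
Local Notation n := (#|F| - 1)%N.
Local Notation Tp := (mchar_pow T).
Local Notation th := (theta p zeta).
Local Notation G a := (gauss p zeta (Tp a)).
Let TpM := TpM HT.
Let TX := TX HT.
Let Tp1 := Tp1 HT.
Let Tp_dvd := Tp_dvd HT.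
Let Tp_mod := Tp_mod HT.
Let Tp_neq0 := Tp_neq0 HT.
Let Tp_eq0 := Tp_eq0 HT.
Let sumTp := sumTp HT.
Let sumTpj := sumTpj HT.
Let thetaD := thetaD Hp HpF Hzeta.
Let theta0 := theta0 zeta Hp HpF.
Let sum_theta := sum_theta Hp HpF Hzeta.
Hypothesis Hq : (#|F| %% 4 = 1)%N.
Definition t := ((#|F| - 1) %/ 4)%N.
Definition h := (2 * t)%N.
Definition J a b := \sum_(x : F) Tp a x * Tp b (1 - x).

Lemma L0 a b : G a * G b = J a b * G (a + b) + (if (n %| a + b)%N then n%:R * Tp b (-1) else 0).
Proof.
rewrite /gauss mulr_suml.
pose I s := \sum_x Tp a x * Tp b (s - x).
have E1 : \sum_x Tp a x * th x * \sum_y Tp b y * th y = \sum_s th s * I s.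
  transitivity (\sum_x \sum_s Tp a x * Tp b (s - x) * th s).
    apply: eq_bigr => x _; rewrite mulr_sumr (reindex_inj (addIr (- x))) /=.
    apply: eq_bigr => s _.
    have -> : th s = th x * th (s - x) by rewrite -thetaD addrC subrK.
    ring.
  rewrite exchange_big /=; apply: eq_bigr => s _; rewrite /I mulr_sumr.
  by apply: eq_bigr => x _; rewrite mulrC.
have EI s : I s = Tp (a + b) s * J a b + (s == 0)%:R * I 0.
  have [->|snz] := eqVneq s 0; first by rewrite Tp0 mul0r add0r mul1r.
  rewrite mul0r addr0 /I /J mulr_sumr (reindex_inj (mulfI snz)) /=.
  apply: eq_bigr => x _.
  rewrite -{2}[s]mulr1 -mulrBr !TpM TpD; ring.
have EI0 : I 0 = if (n %| a + b)%N then n%:R * Tp b (-1) else 0.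
  rewrite /I; under eq_bigr => x _ do rewrite sub0r -mulN1r TpM mulrCA -TpD.
  by rewrite -mulr_sumr sumTp; case: ifP; rewrite ?mulr0 // mulrC.
rewrite E1; under eq_bigr => s _ do rewrite EI mulrDr.
have E2 : \sum_(s : F) th s * ((s == 0)%:R * I 0) = I 0.
  rewrite (bigD1 0) //= eqxx mul1r theta0 mul1r big1 ?addr0 // => s /negbTE ->.
  by rewrite mul0r mulr0.
rewrite big_split /= E2 EI0; congr (_ + _).
by rewrite mulr_sumr; apply: eq_bigr => s _; ring.
Qed.

Lemma sum_delta (y : F) (f : F -> algC) : \sum_x (x == y)%:R * f x = f y.
Proof.
rewrite (bigD1 y) //= eqxx mul1r big1 ?addr0 // => x /negbTE ->.
by rewrite mul0r.
Qed.

Lemma G0 a : (n %| a)%N -> G a = -1.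
Proof.
move=> na; rewrite /gauss.
have E x : Tp a x * th x = th x - (x == 0)%:R * 1.
  have [->|xnz] := eqVneq x 0; first by rewrite Tp0 mul0r theta0 mul1r subrr.
  by rewrite Tp_dvd // mul1r mul0r subr0.
under eq_bigr => x _ do rewrite E.
by rewrite sumrB sum_theta sum_delta sub0r.
Qed.

Lemma Tpm1 a : Tp a (-1) * Tp a (-1) = 1.
Proof. by rewrite -TpM mulrNN mulr1 Tp1. Qed.

Lemma Jneg a b : ~~ (n %| b)%N -> (n %| a + b)%N -> J a b = - Tp b (-1).
Proof.
move=> nb nab; rewrite /J.
have E x : Tp a x * Tp b (1 - x) = Tp b (x^-1 - 1) - (x == 0)%:R * Tp b (-1).
  have [->|xnz] := eqVneq x 0.
    by rewrite Tp0 mul0r invr0 sub0r mul1r subrr.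
  have -> : x^-1 - 1 = x^-1 * (1 - x) by rewrite mulrBr mulr1 mulVf.
  rewrite mul0r subr0 TpM.
  congr (_ * _).
  have h1 : Tp a x * Tp b x = 1 by rewrite -TpD Tp_dvd.
  have h2 : Tp b x^-1 * Tp b x = 1 by rewrite -TpM mulVf // Tp1.
  have bx : Tp b x != 0 by rewrite Tp_neq0.
  by apply: (mulIf bx); rewrite h1 h2.
under eq_bigr => x _ do rewrite E.
rewrite sumrB sum_delta.
rewrite (reindex_inj invr_inj) /=.
under eq_bigr => x _ do rewrite invrK.
rewrite (reindex_inj (addIr 1)) /=.
under eq_bigr => x _ do rewrite addrK.
by rewrite sumTp (negbTE nb) sub0r.
Qed.

Lemma qn : q%:R = n%:R + 1 :> algC.
Proof. by rewrite {1}qE -addn1 natrD. Qed.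

Lemma L2 a b : ~~ (n %| a)%N -> (n %| a + b)%N -> G a * G b = q%:R * Tp a (-1).
Proof.
move=> na nab.
have nb : ~~ (n %| b)%N by move: na; apply: contra => nb; rewrite -(dvdn_addl _ nb).
rewrite L0 nab Jneg // G0 // qn.
have -> : Tp b (-1) = Tp a (-1).
  have h : Tp a (-1) * Tp b (-1) = 1 by rewrite -TpD Tp_dvd // oppr_eq0 oner_eq0.
  by rewrite -[Tp b _]mul1r -(Tpm1 a) -mulrA h mulr1.
ring.
Qed.

Lemma Gnz a : G a != 0.
Proof.
case na : (n %| a)%N; first by rewrite G0 // oppr_eq0 oner_eq0.
have nab : (n %| a + (n - a %% n))%N.
  rewrite {1}(divn_eq a n) -addnA subnKC; last by rewrite ltnW // ltn_mod n_gt0.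
  by rewrite dvdn_add ?dvdn_mull.
have := L2 (negbT na) nab; apply: contra_eqN => /eqP ->.
rewrite mul0r eq_sym mulf_eq0 pnatr_eq0 negb_or; apply/andP; split.
  by rewrite -lt0n ltnW // q_gt1.
by rewrite Tp_eq0 oppr_eq0 oner_eq0.
Qed.

Lemma L1 a b : ~~ (n %| a + b)%N -> G a * G b = J a b * G (a + b).
Proof. by move=> nab; rewrite L0 (negbTE nab) addr0. Qed.

Lemma Jsym a b : J a b = J b a.
Proof.
rewrite /J (reindex_inj (inv_inj (subKr 1))) /=.
by apply: eq_bigr => x _; rewrite subKr mulrC.
Qed.

Lemma n4 : n = (4 * t)%N.
Proof.
have e : n = (q %/ 4 * 4)%N by rewrite {1}(divn_eq q 4) Hq addnK.
by rewrite /t {2}e mulnK // mulnC.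
Qed.

Lemma t_gt0 : (0 < t)%N.
Proof. by have := n_gt0 F; rewrite {1}n4 muln_gt0. Qed.

Lemma sum_delta_ord k (c : nat -> algC) : (k < n)%N ->
  \sum_(j < n) ((j : nat) == k)%:R * c j = c k.
Proof.
move=> kn; rewrite (bigD1 (Ordinal kn)) //= eqxx mul1r big1 ?addr0 // => j.
by move=> nj; rewrite (_ : (_ == _) = false) ?mul0r //; apply/negbTE; apply: contra nj => /eqP e; apply/eqP/ord_inj.
Qed.

Lemma dvd2j (j : nat) : (j < n)%N -> (n %| j + j)%N = (j == 0)%N || (j == h).
Proof.
move=> jn; have e1 : n = (2 * h)%N by rewrite /h mulnA -n4.
have jlt : (j < 2 * h)%N by rewrite -e1.
have ht : h = (2 * t)%N by [].
rewrite e1 addnn -mul2n dvdn_pmul2l //.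
have hp : (0 < h)%N by rewrite ht muln_gt0 t_gt0.
case: (ltnP j h) => jh.
  by rewrite /dvdn modn_small // (ltn_eqF jh) orbF.
have -> : j = (h + (j - h))%N by rewrite subnKC.
rewrite dvdn_addr // /dvdn modn_small; last by rewrite ltn_subLR // addnn -mul2n.
case: (j - h)%N => [|k]; first by rewrite addn0 !eqxx orbT.
by rewrite addn_eq0 andbF /= -{2}[h]addn0 eqn_add2l.
Qed.
Lemma hh : (h + h)%N = n.
Proof. by rewrite n4 /h addnn -mul2n mulnA. Qed.

Lemma nR_neq0 : (n%:R : algC) != 0.
Proof. by rewrite pnatr_eq0 -lt0n n_gt0. Qed.

Lemma Tp_inv_h u : Tp h u^-1 = Tp h u.
Proof.
have [->|unz] := eqVneq u 0; first by rewrite invr0.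
have h1 : Tp h u^-1 * Tp h u = 1 by rewrite -TpM mulVf // Tp1.
have h2 : Tp h u * Tp h u = 1 by rewrite -TpD hh Tp_dvd.
by rewrite -[LHS]mulr1 -h2 mulrA h1 mul1r.
Qed.

Lemma sq_count u : u != 0 -> \sum_(s : F) (s * s == u)%:R = 1 + Tp h u :> algC.
Proof.
move=> unz.
have E s : (s * s == u)%:R = n%:R^-1 * \sum_(j < n) Tp j (s * s) * Tp j u^-1 :> algC.
  under eq_bigr => j _ do rewrite -TpM.
  have [->|snz] := eqVneq s 0.
    rewrite mul0r (eq_sym 0) (negbTE unz) big1 ?mulr0 // => j _.
    by rewrite mul0r Tp0.
  rewrite sumTpj ?mulf_neq0 ?invr_eq0 //.
  have -> : (s * s * u^-1 == 1) = (s * s == u).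
    apply/eqP/eqP => [e|->]; last by rewrite mulfV.
    by rewrite -[s * s](divfK unz) e mul1r.
  by case: ifP => _; rewrite ?mulr0 // mulVf // nR_neq0.
under eq_bigr => s _ do rewrite E.
rewrite -mulr_sumr exchange_big /=.
under eq_bigr => j _ do rewrite -mulr_suml.
under eq_bigr => j _ do under eq_bigr => s _ do rewrite TpM -TpD.
under eq_bigr => j _ do rewrite sumTp dvd2j ?ltn_ord //.
have E2 (j : 'I_n) : (if ((j : nat) == 0%N) || ((j : nat) == h) then n%:R else 0) * Tp j u^-1
   = n%:R * (((j : nat) == 0%N)%:R * Tp j u^-1 + ((j : nat) == h)%:R * Tp j u^-1) :> algC.
  have hp : (0 < h)%N by rewrite muln_gt0 t_gt0.
  have [j0|j0] := eqVneq (j : nat) 0%N.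
    by rewrite j0 /= eq_sym (gtn_eqF hp) mul0r addr0 mul1r.
  rewrite /= mul0r add0r.
  by have [jh|jh] := eqVneq (j : nat) h; rewrite ?mul1r ?mul0r ?mulr0.
under eq_bigr => j _ do rewrite E2.
rewrite -mulr_sumr mulrA mulVf ?nR_neq0 // mul1r big_split /=.
rewrite (sum_delta_ord (k:=0%N) (fun j => Tp j u^-1)) ?n_gt0 //.
rewrite (sum_delta_ord (k:=h) (fun j => Tp j u^-1)); last by rewrite -hh -addn1 leq_add2l muln_gt0 t_gt0.
by rewrite Tp_dvd ?dvdn0 ?invr_eq0 // Tp_inv_h.
Qed.

Lemma sq_sum (f : F -> algC) : \sum_s f (s * s) = \sum_u (1 + Tp h u) * f u.
Proof.
transitivity (\sum_s \sum_u (u == s * s)%:R * f u).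
  by apply: eq_bigr => s _; rewrite sum_delta.
rewrite exchange_big; apply: eq_bigr => u _; rewrite -mulr_suml.
congr (_ * _); under eq_bigr => s _ do rewrite eq_sym.
have [->|unz] := eqVneq u 0; last exact: sq_count.
under eq_bigr => s _ do rewrite mulf_eq0 orbb -[(s == 0)%:R]mulr1.
by rewrite sum_delta Tp0 addr0.
Qed.
Lemma two_neq0 : (2%:R : F) != 0.
Proof.
rewrite -(dvdn_pcharf HpF); apply/negP => /dvdn_leq p2.
have p1 := prime_gt1 Hp.
have : p = 2%N by apply/eqP; rewrite eqn_leq p2 /=.
by move=> e; move: Hodd; rewrite e.
Qed.

Lemma sum1sub a : ~~ (n %| a)%N -> \sum_(u : F) Tp a (1 - u) = 0.
Proof.
move=> na; rewrite (reindex_inj (inv_inj (subKr 1))) /=.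
under eq_bigr => u _ do rewrite subKr.
by rewrite sumTp (negbTE na).
Qed.

Lemma L3 a : ~~ (n %| a)%N -> Tp a 4 * J a a = J h a.
Proof.
move=> na; rewrite /J mulr_sumr.
have i2nz : (2%:R : F)^-1 != 0 by rewrite invr_eq0 two_neq0.
have inj : injective (fun s : F => (1 + s) * (2%:R)^-1).
  by move=> x y /(mulIf i2nz) /addrI.
rewrite (reindex_inj inj) /=.
have E s : Tp a 4 * (Tp a ((1 + s) * 2%:R^-1) * Tp a (1 - (1 + s) * 2%:R^-1))
    = Tp a (1 - s * s).
  rewrite -!TpM; congr (Tp a _).
  by field; exact: two_neq0.
under eq_bigr => s _ do rewrite E.
have := sq_sum (fun u => Tp a (1 - u)); rewrite /= => ->.
under eq_bigr => u _ do rewrite mulrDl mul1r.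
by rewrite big_split /= sum1sub // add0r.
Qed.

Lemma HD a : ~~ (n %| a + a)%N -> Tp a 4 * G a * G (a + h) = G h * G (a + a).
Proof.
move=> n2a.
have na : ~~ (n %| a)%N by apply: contra n2a => d; rewrite dvdn_add.
have nah : ~~ (n %| a + h)%N.
  apply: contra n2a => d.
  have : (n %| (a + h) + (a + h))%N by rewrite dvdn_add.
  by rewrite addnACA hh dvdn_addl.
have e1 := L1 n2a.
have e2 := L1 nah.
have e3 := L3 na.
apply: (mulfI (Gnz a)).
transitivity (Tp a 4 * (G a * G a) * G (a + h)); first by ring.
rewrite e1 mulrA e3 Jsym.
transitivity ((J a h * G (a + h)) * G (a + a)); first by ring.
by rewrite -e2; ring.
Qed.
Definition c := Tp t (-1).

Lemma h_ndvd : ~~ (n %| h)%N.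
Proof.
have hp : (0 < h)%N by rewrite muln_gt0 t_gt0.
apply/negP => /(dvdn_leq hp); rewrite n4 /h.
have := t_gt0; move: t => x x0; apply/negP; rewrite -ltnNge; lia.
Qed.

Lemma GhGh : G h * G h = q%:R.
Proof.
rewrite L2 ?h_ndvd ?hh //.
have -> : Tp h (-1) = 1.
  by rewrite /h mul2n -addnn TpD Tpm1.
by rewrite mulr1.
Qed.

Lemma Tph_m1 : Tp h (-1) = 1.
Proof. by rewrite /h mul2n -addnn TpD Tpm1. Qed.

Lemma GtG3t : G t * G (t + h) = q%:R * c.
Proof.
rewrite L2 //.
  by apply: contra h_ndvd => d; rewrite /h mul2n -addnn dvdn_add.
have -> : (t + (t + h) = h + h)%N by rewrite /h; lia.
by rewrite hh.
Qed.

Lemma cT4 : Tp t 4 * c = 1.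
Proof.
have := HD (a := t); rewrite addnn -mul2n -/h GhGh => /(_ h_ndvd).
have qnz : (q%:R : algC) != 0 by rewrite pnatr_eq0 -lt0n ltnW // q_gt1.
rewrite -mulrA GtG3t mulrCA => e; apply: (mulfI qnz); by rewrite e mulr1.
Qed.

Lemma four_neq0 : (4 : F) != 0.
Proof.
have -> : (4 : F) = 2%:R * 2%:R by rewrite -natrM.
by rewrite mulf_neq0 // two_neq0.
Qed.

Lemma generic j (l : F) : l != 0 -> ~~ (n %| 4 * j)%N ->
  G j * G (t + j) ^+ 2 * G (2 * t + j) / G (4 * j) * Tp (4 * j) (4 * l)
  = q%:R * c * J h (j + t) * Tp (4 * (j + t)) l.
Proof.
move=> lnz n4j.
have nt := n4.
have e4 : (4 * j = (j + j) + (j + j))%N by lia.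
have eh : (2 * t + j = j + h)%N by rewrite /h; lia.
have es : (t + j = j + t)%N by lia.
have ess : ((j + t) + (j + t) = (j + j) + h)%N by rewrite /h; lia.
have e4t : (4 * (j + t) = 4 * j + n)%N by lia.
have eT : (4 * j + t = j + (j + j) + (j + t))%N by lia.
have d1 : ~~ (n %| j + j)%N by apply: contra n4j => d; rewrite e4 dvdn_add.
have d2 : ~~ (n %| (j + j) + (j + j))%N by rewrite -e4.
have d3 : ~~ (n %| (j + t) + (j + t))%N.
  apply: contra n4j => d; rewrite -(dvdn_addl (4 * j) (dvdnn n)) -e4t.
  have -> : (4 * (j + t) = ((j + t) + (j + t)) + ((j + t) + (j + t)))%N by lia.
  by rewrite dvdn_add.
have d4 : ~~ (n %| j + t)%N by apply: contra d3 => d; rewrite dvdn_add.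
have H1 := HD d1.
have H2 := HD d2.
have H4 := L1 d3.
have H5 := L3 d4.
have Hc := cT4.
have HT4 : Tp (4 * j) 4 * Tp t 4 = Tp j 4 * Tp (j + j) 4 * Tp (j + t) 4.
  by rewrite -!TpD -eT.
rewrite e4t TpD (Tp_dvd (j := n)) // mulr1 TpM eh es e4.
rewrite ess in H4.
rewrite e4 in HT4.
move: H1 H2 H4 H5 Hc HT4 GhGh.
have nzA := Gnz j; have nzD := Gnz (j + j); have nzH := Gnz (j + j + h).
have nzC := Gnz h.
have nzt1 : Tp j 4 != 0 := Tp_neq0 j four_neq0.
have nzt2 : Tp (j + j) 4 != 0 := Tp_neq0 (j + j) four_neq0.
have nzt3 : Tp (j + t) 4 != 0 := Tp_neq0 (j + t) four_neq0.
have nzt4 : Tp t 4 != 0 := Tp_neq0 t four_neq0.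
move: (G j) (G (j + t)) (G h) (G (j + j)) (G (j + h)) (G (j + j + (j + j))) (G (j + j + h))
  (J (j + t) (j + t)) (J h (j + t)) nzA nzD nzH nzC => A B C D E Fq H K L nzA nzD nzH nzC.
move: (Tp j 4) (Tp (j + j) 4) (Tp (j + t) 4) (Tp t 4) (Tp (j + j + (j + j)) 4) (Tp (j + j + (j + j)) l) c
   nzt1 nzt2 nzt3 nzt4 => t1 t2 t3 t4 t5 tl cc nz1 nz2 nz3 nz4.
move=> H1 H2 H4 H5 Hc HT4 HC.
have eE : E = C * D / (t1 * A).
  by rewrite -H1; field; rewrite nzA nz1.
have eF : Fq = t2 * D * H / C.
  by rewrite H2; field; rewrite nzC.
have eL : L = t3 * K by rewrite H5.
have eK : K = B * B / H by rewrite H4; field; rewrite nzH.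
have ec : cc = t4^-1.
  by rewrite -[cc]mul1r -(mulVf nz4) -mulrA Hc mulr1.
have e5 : t5 = t1 * t2 * t3 / t4 by rewrite -HT4; field; rewrite nz4.
rewrite eE eF eL eK ec e5 -HC.
field.
by rewrite nzH nz4 nzC nzD nz2 nzA nz1.
Qed.
Definition Term (l : F) j :=
  G j * G (t + j) ^+ 2 * G (2 * t + j) / G (4 * j) * Tp (4 * j) (4 * l).
Definition Gen (l : F) j := q%:R * c * J h (j + t) * Tp (4 * (j + t)) l.

Lemma Tp_addmn k m x : Tp (k + m * n) x = Tp k x.
Proof.
have [->|xnz] := eqVneq x 0; first by rewrite !Tp0.
by rewrite TpD (Tp_dvd (dvdn_mull m (dvdnn n)) xnz) mulr1.
Qed.

Lemma G_addmn k m : G (k + m * n) = G k.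
Proof. by rewrite /gauss; apply: eq_bigr => x _; rewrite Tp_addmn. Qed.

Lemma J_addmn a k m : J a (k + m * n) = J a k.
Proof. by rewrite /J; apply: eq_bigr => x _; rewrite Tp_addmn. Qed.

Lemma Jhh : J h h = -1.
Proof.
have := L0 h h; rewrite hh dvdnn (G0 (dvdnn n)) Tph_m1 mulr1 GhGh qn => e.
have e2 : J h h * -1 = 1 by apply: (addIr n%:R); rewrite -e addrC.
by move: (congr1 (fun x => - x) e2); rewrite mulrN1 opprK.
Qed.

Lemma Jhn : J h n = -1.
Proof.
rewrite /J.
have E x : Tp h x * Tp n (1 - x) = Tp h x - (x == 1)%:R * Tp h x.
  have [->|x1] := eqVneq x 1; first by rewrite subrr Tp0 mulr0 mul1r subrr.
  by rewrite (Tp_dvd (dvdnn n)) ?subr_eq0 1?eq_sym // mulr1 mul0r subr0.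
under eq_bigr => x _ do rewrite E.
by rewrite sumrB sum_delta Tp1 sumTp (negbTE h_ndvd) sub0r.
Qed.

Lemma four_l_neq0 (l : F) : l != 0 -> 4 * l != 0.
Proof. by move=> lnz; rewrite mulf_neq0 // four_neq0. Qed.

Lemma exc0 l : l != 0 -> Term l 0 = Gen l 0.
Proof.
move=> lnz; rewrite /Term /Gen !addn0 add0n muln0 G0 // Tp_dvd ?four_l_neq0 //.
rewrite -[(4 * t)%N]/(4 * t)%N -n4 Tp_dvd // mulr1.
have dht : ~~ (n %| h + t)%N.
  rewrite n4 /h; apply/negP => d; have := dvdn_leq _ d.
  have := t_gt0; move: d; move: t => x; lia.
have e1 := L1 dht; rewrite (addnC h t) in e1.
rewrite -/h.
transitivity (G t * (G h * G t)); first by field.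
by rewrite e1 mulrCA GtG3t; ring.
Qed.
Lemma Tp_mn m x : x != 0 -> Tp (m * n) x = 1.
Proof. by move=> xnz; rewrite Tp_dvd // dvdn_mull. Qed.

Lemma G_mn m : G (m * n) = -1.
Proof. by rewrite G0 // dvdn_mull. Qed.

Lemma excT l : l != 0 -> Term l t = Gen l t + (q%:R * c - q%:R * q%:R * c).
Proof.
move=> lnz; have nt := n4; rewrite /Term /Gen.
have -> : (t + t = h)%N by rewrite /h; lia.
have -> : (2 * t + t = t + h)%N by rewrite /h; lia.
have -> : (4 * t = 1 * n)%N by lia.
have -> : (4 * h = 2 * n)%N by rewrite /h; lia.
rewrite G_mn !Tp_mn ?four_l_neq0 // Jhh.
transitivity (- (G h * G h) * (G t * G (t + h))); first by field.
by rewrite GhGh GtG3t; ring.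
Qed.

Lemma exc2 l : l != 0 -> Term l h = Gen l h.
Proof.
move=> lnz; have nt := n4; rewrite /Term /Gen.
have -> : (2 * t + h = 1 * n)%N by rewrite /h; lia.
have -> : (4 * h = 2 * n)%N by rewrite /h; lia.
have -> : (h + t = t + h)%N by rewrite /h; lia.
have -> : (4 * (t + h) = 3 * n)%N by rewrite /h; lia.
rewrite !G_mn !Tp_mn ?four_l_neq0 //.
have dd : ~~ (n %| h + (t + h))%N.
  have -> : (h + (t + h) = t + 1 * n)%N by rewrite /h; lia.
  rewrite (dvdn_addl _ (dvdn_mull 1 (dvdnn n))); apply/negP => d.
  have := dvdn_leq t_gt0 d; have := t_gt0; move: t nt => x; lia.
have e1 := L1 dd.
have e2 : G (h + (t + h)) = G t.
  have -> : (h + (t + h) = t + 1 * n)%N by rewrite /h; lia.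
  exact: G_addmn.
transitivity (G (t + h) * (G h * G (t + h))); first by field.
rewrite e1 e2.
transitivity (J h (t + h) * (G t * G (t + h))); first by ring.
by rewrite GtG3t; ring.
Qed.

Lemma exc3 l : l != 0 -> Term l (t + h) = Gen l (t + h).
Proof.
move=> lnz; have nt := n4; rewrite /Term /Gen.
have -> : (t + (t + h) = 1 * n)%N by rewrite /h; lia.
have -> : (2 * t + (t + h) = t + 1 * n)%N by rewrite /h; lia.
have -> : (4 * (t + h) = 3 * n)%N by rewrite /h; lia.
have -> : (t + h + t = 1 * n)%N by rewrite /h; lia.
have -> : (4 * (1 * n) = 4 * n)%N by lia.
rewrite !G_mn !Tp_mn ?four_l_neq0 // G_addmn mul1n Jhn.
transitivity (- (G t * G (t + h))); first by field.
by rewrite GtG3t; ring.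
Qed.
Lemma exc_char j : (j < n)%N -> (n %| 4 * j)%N -> [\/ j = 0%N, j = t, j = h | j = (t + h)%N].
Proof.
move=> jn; have nt := n4; rewrite {1}nt dvdn_pmul2l // => /dvdnP [k jk].
have kl : (k < 4)%N.
  rewrite -(ltn_pmul2r t_gt0) -jk -nt; exact: jn.
have tp := t_gt0.
move: kl; rewrite /h jk.
case: k {jk} => [|[|[|[|k]]]] _ //.
- by constructor 1; lia.
- by constructor 2; lia.
- by constructor 3; lia.
- by constructor 4; lia.
Qed.

Lemma diffTG l j : l != 0 -> (j < n)%N ->
  Term l j - Gen l j = ((j : nat) == t)%:R * (q%:R * c - q%:R * q%:R * c).
Proof.
move=> lnz jn; have tp := t_gt0.
case nd : (n %| 4 * j)%N; last first.
  rewrite [Term l j](generic lnz (negbT nd)) subrr.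
  have -> : (j == t) = false.
    apply/negP => /eqP jt; move: nd; rewrite jt n4.
    by rewrite dvdnn.
  by rewrite mul0r.
case: (exc_char jn nd) => ->.
- by rewrite exc0 // subrr eq_sym gtn_eqF // mul0r.
- by rewrite excT // addrC addKr eqxx mul1r.
- rewrite exc2 // subrr.
  have -> : (h == t) = false by rewrite /h; apply/negP => /eqP; lia.
  by rewrite mul0r.
- rewrite exc3 // subrr.
  have -> : (t + h == t)%N = false by rewrite /h; apply/negP => /eqP; lia.
  by rewrite mul0r.
Qed.

Lemma shift1 (m : nat) (g : nat -> algC) :
  (forall i, g (i + m)%N = g i) -> \sum_(j < m) g j.+1 = \sum_(j < m) g j.
Proof.
case: m => [|m] gp; first by rewrite !big_ord0.
rewrite big_ord_recr big_ord_recl /= -(gp 0%N) add0n addrC; congr (_ + _).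
Qed.

Lemma shift_sum (f : nat -> algC) k :
  (forall i, f (i + n)%N = f i) -> \sum_(j < n) f (j + k)%N = \sum_(j < n) f j.
Proof.
move=> fp; elim: k => [|k IH]; first by under eq_bigr => j _ do rewrite addn0.
rewrite -IH; under eq_bigr => j _ do rewrite addnS -addSn.
apply: (shift1 (g := fun i => f (i + k)%N)) => i.
by rewrite addnAC fp.
Qed.

Lemma TpXn k a (x : F) : x != 0 -> Tp (k * a) x = Tp a (x ^+ k).
Proof.
move=> xnz; rewrite !TpE ?expf_neq0 // TX -exprM.
by [].
Qed.

Lemma SumJ (l : F) : l != 0 ->
  \sum_(s < n) J h s * Tp (4 * s) l = n%:R * Tp h (1 - l ^+ 4).
Proof.
move=> lnz; set L := l ^+ 4.
have Lnz : L != 0 by rewrite expf_neq0.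
under eq_bigr => s _ do rewrite TpXn // /J mulr_suml.
rewrite exchange_big /=.
have E x : \sum_(s < n) Tp h x * Tp s (1 - x) * Tp s L
    = (x == 1 - L^-1)%:R * (n%:R * Tp h x).
  under eq_bigr => s _ do rewrite -mulrA -TpM.
  rewrite -mulr_sumr.
  have [y0|ynz] := eqVneq ((1 - x) * L) 0.
    rewrite y0 big1; last by move=> s _; rewrite Tp0.
    have -> : (x == 1 - L^-1) = false.
      apply/negP => /eqP ex; move: y0; rewrite ex opprB addrC subrK mulVf //.
      by move/eqP; rewrite oner_eq0.
    by rewrite mulr0 mul0r.
  rewrite sumTpj //.
  have -> : ((1 - x) * L == 1) = (x == 1 - L^-1).
    apply/eqP/eqP => [e|->].
      have : 1 - x = L^-1 by apply: (mulIf Lnz); rewrite e mulVf.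
      by move=> e2; rewrite -e2 opprB addrC subrK.
    by rewrite opprB addrC subrK mulVf.
  by case: (x == _); rewrite ?mul1r ?mul0r ?mulr0 // mulrC.
under eq_bigr => x _ do rewrite E.
rewrite sum_delta; congr (_ * _).
have -> : 1 - L^-1 = -1 * ((1 - l ^+ 4) * L^-1).
  by rewrite mulrBl mul1r mulfV // mulN1r opprB.
rewrite !TpM Tph_m1 mul1r Tp_inv_h /L -TpXn //.
have -> : (4 * h = 2 * n)%N by rewrite /h n4; lia.
by rewrite Tp_mn ?mulr1.
Qed.

Lemma SumGen l : l != 0 -> \sum_(j < n) Gen l j = q%:R * c * (n%:R * Tp h (1 - l ^+ 4)).
Proof.
move=> lnz; rewrite /Gen -SumJ // mulr_sumr.
under eq_bigr => j _ do rewrite -mulrA.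
apply: (shift_sum (f := fun s => q%:R * c * (J h s * Tp (4 * s) l))) => i.
by rewrite -[n]mul1n J_addmn mulnDr mul1n Tp_addmn.
Qed.

Theorem main (l : F) : l != 0 ->
  (12 / n%:R) * \sum_(j < n) Term l j = 12 * q%:R * c * (Tp h (1 - l ^+ 4) - 1).
Proof.
move=> lnz.
have -> : \sum_(j < n) Term l j = \sum_(j < n) Gen l j + \sum_(j < n) (Term l j - Gen l j).
  by rewrite -big_split /=; apply: eq_bigr => j _; rewrite addrC subrK.
rewrite SumGen //.
under eq_bigr => j _ do rewrite diffTG ?ltn_ord //.
rewrite (sum_delta_ord (k := t) (fun _ => q%:R * c - q%:R * q%:R * c)); last first.
  by rewrite n4 -{1}[t]mul1n ltn_pmul2r ?t_gt0.
rewrite qn; field.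
by rewrite nR_neq0.
Qed.
End Main.

Unset Implicit Arguments.

Theorem proposition4p4 (F : finFieldType) (p : nat) (zeta : algC)
    (T : F -> algC) (lambda : F)
    (Hp : prime p) (Hodd : odd p) (HpF : p \in [pchar F])
    (Hq : (#|F| %% 4 = 1)%N)
    (Hzeta : p.-primitive_root zeta)
    (HT : mchar_generator T)
    (Hlam : lambda != 0) :
  let q := #|F| in
  let t := ((q - 1) %/ 4)%N in
  let g := gauss p zeta in
  let Tp := mchar_pow T in
  (12 / (q - 1)%:R) *
    \sum_(j < q - 1)
      (g (Tp j) * g (Tp (t + j)%N) ^+ 2 * g (Tp (2 * t + j)%N) / g (Tp (4 * j)%N))
      * Tp (4 * j)%N (4 * lambda)
  = 12 * q%:R * Tp t (-1) * (Tp (2 * t)%N (1 - lambda ^+ 4) - 1).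
Proof.
move=> q t0 g Tp0.
have := main Hp Hodd HpF Hzeta HT Hq Hlam.
rewrite /Term /c /h /t /q /t0 /g /Tp0.
by [].
Qed.
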